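(* Let $n\ge2$ and let $r_1,\dots,r_{N(n)}$ be the inflection points of the Hilbert curve $H_n$ (or of any image of $H_n$ under an invertible affine map). Then $\bar\kappa_k=0$ for all $2\le k\le N(n)-2$, and the sequence of first affine curvatures $(\kappa_2,\kappa_3,\dots,\kappa_{N(n)-2})$ equals the number sequence obtained by writing $1$, then the word $K_n$ with each letter replaced by its number string, then $1$. For example, for $n=2$ it is $1,-2,1,\tfrac12,-1,1,-1,2,1,-\tfrac12,1$.
   Context: The Hilbert curve at step $n$ is the polygon $H_n$ in the unit square defined recursively: $H_1$ has vertices $(\tfrac14,\tfrac14),(\tfrac14,\tfrac34),(\tfrac34,\tfrac34),(\tfrac34,\tfrac14)$; $H_{n+1}$ is the concatenation (in this order, joined by the connecting edges) of $f_1(H_n),f_2(H_n),f_3(H_n),f_4(H_n)$, where $f_1(x,y)=(\tfrac y2,\tfrac x2)$, $f_2(x,y)=(\tfrac x2,\tfrac y2+\tfrac12)$, $f_3(x,y)=(\tfrac x2+\tfrac12,\tfrac y2+\tfrac12)$, $f_4(x,y)=(1-\tfrac y2,\tfrac12-\tfrac x2)$, each copy traversed in the order inherited from $H_n$. The inflection points $r_1,\dots,r_{N(n)}$ of $H_n$ are the vertices of $H_n$, in order, after deleting every interior vertex whose two neighbouring vertices are collinear with it (endpoints kept). Affine curvatures: $t_k=r_{k+1}-r_k$, $[a,b]=a_1b_2-a_2b_1$, and for $2\le k\le N-2$ with $[t_{k-1},t_k]\ne0$, $\kappa_k=\dfrac{[t_k,t_{k+1}]}{[t_{k-1},t_k]}$,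 $\bar\kappa_k=\dfrac{[t_{k-1},t_{k+1}]}{[t_{k-1},t_k]}$. Letters and their number strings: $P=(-2,1,\tfrac12,-1,1,-1,2,1,-\tfrac12)$, $S=(2,1,-\tfrac12,1)$, $T=(3,1,\tfrac13)$, $U=(1,-2,1,\tfrac12)$, $V=(1,-1,1,-1,1)$. Words $K_n$ ($n\ge2$) over $\{P,S,T,U,V\}$: $K_2=P$; $K_{2m+1}=K_{2m}\,S\,K_{2m}\,T\,K_{2m}\,U\,K_{2m}$ for $m\ge1$; $K_{2m}=K_{2m-1}\,U\,K_{2m-1}\,V\,K_{2m-1}\,S\,K_{2m-1}$ for $m\ge2$ (so $K_3=PSPTPUP$). *)

(* Defs.v *)
From HB Require Import structures.
From mathcomp Require Import all_boot all_order all_algebra.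
Set Implicit Arguments. Unset Strict Implicit. Unset Printing Implicit Defensive.
Import Order.TTheory GRing.Theory Num.Theory.
Local Open Scope ring_scope.

Section Hilbert.
Variable R : realFieldType.
Definition pt := (R * R)%type.

Definition f1 (p : pt) : pt := (p.2 / 2, p.1 / 2).
Definition f2 (p : pt) : pt := (p.1 / 2, p.2 / 2 + 1 / 2).
Definition f3 (p : pt) : pt := (p.1 / 2 + 1 / 2, p.2 / 2 + 1 / 2).
Definition f4 (p : pt) : pt := (1 - p.2 / 2, 1 / 2 - p.1 / 2).

Definition H1 : seq pt := [:: (1/4, 1/4); (1/4, 3/4); (3/4, 3/4); (3/4, 1/4)].

(* hilb k = vertex list of H_(k+1) *)
Fixpoint hilb (k : nat) : seq pt :=
  match k with
  | 0 => H1
  | k'.+1 => let h := hilb k' in map f1 h ++ map f2 h ++ map f3 h ++ map f4 h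
  end.

Definition hilbert (n : nat) : seq pt := hilb n.-1.

Definition psub (p q : pt) : pt := (p.1 - q.1, p.2 - q.2).
Definition bracket (a b : pt) : R := a.1 * b.2 - a.2 * b.1.
Definition collinear (p q r : pt) : bool := bracket (psub q p) (psub r p) == 0.

Definition keep (s : seq pt) (i : nat) : bool :=
  (i == 0%N) || (i == (size s).-1) ||
  ~~ collinear (nth (0,0) s i.-1) (nth (0,0) s i) (nth (0,0) s i.+1).
Definition inflections (s : seq pt) : seq pt :=
  [seq nth (0,0) s i | i <- iota 0 (size s) & keep s i].

(* 1-indexed: r s k = r_k, tv s k = t_k = r_(k+1) - r_k *)
Definition r (s : seq pt) (k : nat) : pt := nth (0,0) s k.-1.
Definition tv (s : seq pt) (k : nat) : pt := psub (r s k.+1) (r s k).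
Definition kappa (s : seq pt) (k : nat) : R :=
  bracket (tv s k) (tv s k.+1) / bracket (tv s k.-1) (tv s k).
Definition kappabar (s : seq pt) (k : nat) : R :=
  bracket (tv s k.-1) (tv s k.+1) / bracket (tv s k.-1) (tv s k).

Definition affmap (a b c d e f : R) (p : pt) : pt :=
  (a * p.1 + b * p.2 + e, c * p.1 + d * p.2 + f).

Inductive letter := LP | LS | LT | LU | LV.

Definition numstring (l : letter) : seq R :=
  match l with
  | LP => [:: -2; 1; 1/2; -1; 1; -1; 2; 1; -(1/2)]
  | LS => [:: 2; 1; -(1/2); 1]
  | LT => [:: 3; 1; 1/3]
  | LU => [:: 1; -2; 1; 1/2]
  | LV => [:: 1; -1; 1; -1; 1]
  end.
End Hilbert.

(* Kw j = K_(j+2) *)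
Fixpoint Kw (j : nat) : seq letter :=
  match j with
  | 0 => [:: LP]
  | j'.+1 => let w := Kw j' in
      if ~~ odd j' then (* j+2 = j'+3 odd *) w ++ LS :: w ++ LT :: w ++ LU :: w
      else (* j+2 even, >= 4 *) w ++ LU :: w ++ LV :: w ++ LS :: w
  end.

Definition K (n : nat) : seq letter := Kw (n - 2).

Definition expected (R : realFieldType) (n : nat) : seq R :=
  1 :: flatten (map (@numstring R) (K n)) ++ [:: 1].

(* Main.v *)
Require Import Defs.
From HB Require Import structures.
From mathcomp Require Import all_boot all_order all_algebra.
From mathcomp Require Import ring zify.
Set Implicit Arguments. Unset Strict Implicit. Unset Printing Implicit Defensive.
Import Order.TTheory GRing.Theory Num.Theory.
Local Open Scope ring_scope.


Section Gen.
Variable R : realFieldType.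
Implicit Types (s t A B : seq (pt R)) (p x y z : pt R).

Definition nxt (t : seq (pt R)) (q : option (pt R)) :=
  if t is z :: _ then Some z else q.
Definition keep1 p y (o : option (pt R)) : seq (pt R) :=
  if o is Some z then (if collinear p y z then [::] else [:: y]) else [:: y].
Fixpoint inner p s (q : option (pt R)) : seq (pt R) :=
  if s is y :: t then keep1 p y (nxt t q) ++ inner y t q else [::].
Definition infl s := if s is x :: t then x :: inner x t None else [::].

Lemma infl_aux x t pre :
  [seq nth (0,0) (x :: pre ++ t) i | i <- iota (size pre).+1 (size t) & keep (x :: pre ++ t) i]
  = inner (last x pre) t None.
Proof.
elim: t pre => [|y t IH] pre //=.
have E : x :: pre ++ y :: t = x :: rcons pre y ++ t by rewrite cat_rcons.
have Hk : keep (x :: pre ++ y :: t) (size pre).+1 =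
   if t is z :: _ then ~~ collinear (last x pre) y z else true.
  rewrite /keep /= size_cat /= addnS eqSS.
  have -> : nth (0,0) (x :: pre ++ y :: t) (size pre) = last x pre.
    elim/last_ind: pre {E} => [|pre a _] //=.
    by rewrite size_rcons /= nth_cat size_rcons ltnSn nth_rcons ltnn eqxx last_rcons.
  rewrite nth_cat ltnn subnn /=.
  have -> : nth (0,0) (pre ++ y :: t) (size pre).+1 = nth (0,0) t 0.
    by rewrite nth_cat ltnNge leqnSn /= subSn // subnn.
  case: t {IH E} => [|z t] /=; first by rewrite addn0 eqxx.
  by rewrite -[X in X == _]addn0 eqn_add2l.
have Hn : nth (0, 0) (x :: pre ++ y :: t) (size pre).+1 = y.
  by rewrite /= nth_cat ltnn subnn.
rewrite Hk.
have It : iota (size pre).+2 (size t) = iota (size (rcons pre y)).+1 (size t).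
  by rewrite size_rcons.
have M : forall (b : bool) a (l : seq nat) (L : seq (pt R)),
    [seq nth (0,0) L i | i <- if b then a :: l else l] =
    (if b then [:: nth (0,0) L a] else [::]) ++ [seq nth (0,0) L i | i <- l].
  by case.
rewrite M It E IH last_rcons -E Hn.
by case: t {IH E Hk Hn It} => [|z t] //=; case: (collinear _ _ _).
Qed.

Lemma inflectionsE s : inflections s = infl s.
Proof.
case: s => [|x t] //.
rewrite /inflections /= /keep /= -(infl_aux x t [::]) /=.
by [].
Qed.

Lemma inner_cat p A B q :
  inner p (A ++ B) q = inner p A (nxt B q) ++ inner (last p A) B q.
Proof.
elim: A p => [|y A IH] p //=.
rewrite IH catA; congr ((keep1 _ _ _ ++ _) ++ _).
by case: A {IH}.
Qed.


Definition win := (pt R * pt R * pt R * pt R)%type.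
Definition hw (a : pt R) s : seq win :=
  if s is b :: c :: d :: _ then [:: (a,b,c,d)] else [::].
Fixpoint W s : seq win := if s is a :: t then hw a t ++ W t else [::].
Definition l3 s := drop (size s - 3) s.

Lemma W_small s : (size s <= 3)%N -> W s = [::].
Proof. by case: s => [|a [|b [|c [|d s]]]]. Qed.

Lemma hw_take a s : hw a s = hw a (take 3 s).
Proof. by case: s => [|a1 [|b [|c s]]]. Qed.

Lemma take3_cat A B : take 3 (A ++ B) = take 3 (A ++ take 3 B).
Proof.
by rewrite !take_cat; case: ltnP => // h; rewrite take_takel // leq_subr.
Qed.

Lemma take3_big A B : (3 <= size A)%N -> take 3 (A ++ B) = take 3 A.
Proof. exact: takel_cat. Qed.

Lemma l3_small s : (size s <= 3)%N -> l3 s = s.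
Proof. by move=> h; rewrite /l3 (eqP h) drop0. Qed.

Lemma l3_cons a A : (3 <= size A)%N -> l3 (a :: A) = l3 A.
Proof. by move=> h; rewrite /l3 /= subSn. Qed.

Lemma size_l3 s : (3 <= size s)%N -> size (l3 s) = 3.
Proof. by move=> h; rewrite /l3 size_drop subKn. Qed.

Lemma W_cat A B : W (A ++ B) = W A ++ W (l3 A ++ take 3 B) ++ W B.
Proof.
elim: A => [|a A IH] /=.
  by rewrite /l3 /= (@W_small (take 3 B)) // size_take; case: ltnP.
rewrite IH catA.
case: (leqP 3 (size A)) => h.
  by rewrite l3_cons // hw_take take3_big // -hw_take catA.
rewrite (@W_small A) ?(ltnW h) // l3_small ?(ltnW h) // l3_small /=; last by [].
have -> : hw a A = [::] by case: A h {IH} => [|? [|? [|? ?]]].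
rewrite !cats0 /= catA; congr ((_ ++ _) ++ _).
by rewrite hw_take take3_cat -hw_take.
Qed.

Lemma W_join Y C Z : (3 <= size C)%N ->
  W (Y ++ C ++ Z) = W (Y ++ take 3 C) ++ W C ++ W (l3 C ++ Z).
Proof.
move=> h.
have e1 : W (Y ++ C ++ Z) = W Y ++ W (l3 Y ++ take 3 C) ++ W (C ++ Z).
  by rewrite W_cat take3_big.
have e2 : W (C ++ Z) = W C ++ W (l3 C ++ take 3 Z) ++ W Z by rewrite W_cat.
have e3 : W (Y ++ take 3 C) = W Y ++ W (l3 Y ++ take 3 C).
  rewrite W_cat take_takel // (@W_small (take 3 C)) ?cats0 //.
  by rewrite size_take; case: ltnP.
have e4 : W (l3 C ++ Z) = W (l3 C ++ take 3 Z) ++ W Z.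
  by rewrite W_cat (@W_small (l3 C)) ?size_l3 // (@l3_small (l3 C)) ?size_l3.
by rewrite e1 e2 e3 e4 -!catA.
Qed.

Lemma size_W s : size (W s) = (size s - 3)%N.
Proof.
elim: s => [|a t IH] //=.
rewrite size_cat IH.
case: t {IH} => [|b [|c [|d t]]] //=.
by rewrite !subSS subn0 add1n.
Qed.

Lemma nth_W s i w0 x0 : (i < size s - 3)%N ->
  nth w0 (W s) i = (nth x0 s i, nth x0 s i.+1, nth x0 s i.+2, nth x0 s i.+3).
Proof.
elim: s i => [|a t IH] i //=.
case: t IH => [|b [|c [|d t]]] IH //= hi.
case: i hi => [|i] hi //=.
rewrite IH //.
by move: hi => /=; lia.
Qed.

Definition kap4 (w : win) : R :=
  let: (a,b,c,d) := w in bracket (psub c b) (psub d c) / bracket (psub b a) (psub c b).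
Definition good4 (w : win) : bool :=
  let: (a,b,c,d) := w in
  (bracket (psub b a) (psub c b) != 0) && (bracket (psub b a) (psub d c) == 0).

Lemma kappa_list s :
  [seq kappa s k | k <- iota 2 (size s - 3)] = map kap4 (W s).
Proof.
apply: (@eq_from_nth _ 0); first by rewrite size_map size_iota size_map size_W.
move=> i; rewrite size_map size_iota => hi.
rewrite (nth_map 0%N) ?size_iota // (nth_map ((0,0),(0,0),(0,0),(0,0))) ?size_W //.
rewrite (@nth_W s i _ (0,0)) // nth_iota //.
Qed.

Lemma good_cond s : all good4 (W s) ->
  forall k : nat, (2 <= k <= size s - 2)%N ->
      bracket (tv s k.-1) (tv s k) != 0 /\ kappabar s k = 0.
Proof.
move=> /(all_nthP ((0,0),(0,0),(0,0),(0,0))) H k /andP[h1 h2].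
have [i ei] : exists i, k = i.+2 by exists (k - 2)%N; lia.
subst k.
have hi : (i < size (W s))%N by rewrite size_W; lia.
have := H _ hi; rewrite (@nth_W s i _ (0,0)); last by rewrite -size_W.
case/andP=> g1 g2; split; first exact: g1.
rewrite /kappabar /=; have -> : bracket (tv s i.+1) (tv s i.+3) = 0 by apply/eqP; exact: g2.
by rewrite mul0r.
Qed.

End Gen.

Section Map.
Variables R1 R2 : realFieldType.
Variable g : pt R1 -> pt R2.
Definition map4 (w : win R1) : win R2 :=
  let: (a,b,c,d) := w in (g a, g b, g c, g d).

Lemma hw_map a s : hw (g a) (map g s) = map map4 (hw a s).
Proof. by case: s => [|x [|y [|z s]]]. Qed.

Lemma W_map s : W (map g s) = map map4 (W s).
Proof. by elim: s => [|a s IH] //=; rewrite map_cat hw_map IH. Qed.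

Hypothesis gcol : forall a b c, collinear (g a) (g b) (g c) = collinear a b c.

Lemma keep1_map p y o : keep1 (g p) (g y) (omap g o) = map g (keep1 p y o).
Proof. by case: o => [z|] //=; rewrite gcol; case: (collinear _ _ _). Qed.

Lemma inner_map p s q : inner (g p) (map g s) (omap g q) = map g (inner p s q).
Proof.
elim: s p => [|y s IH] p //=.
rewrite map_cat IH -keep1_map; congr (keep1 _ _ _ ++ _).
by case: s {IH}.
Qed.

Lemma infl_map s : infl (map g s) = map g (infl s).
Proof. by case: s => [|x s] //=; rewrite (inner_map x s None). Qed.
End Map.

Section Aff.
Variable R : realFieldType.
Variables a b c d e f : R.
Hypothesis det : a * d - b * c != 0.
Let A := affmap a b c d e f.

Lemma bracket_aff p q p' q' :
  bracket (psub (A p) (A q)) (psub (A p') (A q')) =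
  (a * d - b * c) * bracket (psub p q) (psub p' q').
Proof. rewrite /A /bracket /psub /affmap /=; ring. Qed.

Lemma col_aff p q r : collinear (A p) (A q) (A r) = collinear p q r.
Proof. by rewrite /collinear bracket_aff mulf_eq0 (negbTE det). Qed.

Lemma kap4_aff w : kap4 (map4 A w) = kap4 w.
Proof.
case: w => [[[p q] r] s] /=; rewrite !bracket_aff.
rewrite invfM mulrACA divff ?mul1r //.
Qed.

Lemma good4_aff w : good4 (map4 A w) = good4 w.
Proof.
case: w => [[[p q] r] s] /=; rewrite !bracket_aff !mulf_eq0 (negbTE det) //.
Qed.
End Aff.

Section Rat.
Variable R : realFieldType.
Definition rp (p : pt rat) : pt R := (ratr p.1, ratr p.2).

Lemma bracket_rp p q p' q' :
  bracket (psub (rp p) (rp q)) (psub (rp p') (rp q')) =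
  ratr (bracket (psub p q) (psub p' q')).
Proof. by rewrite /bracket /psub /rp /= !(rmorphB, rmorphM). Qed.

Lemma col_rp p q r : collinear (rp p) (rp q) (rp r) = collinear p q r.
Proof. by rewrite /collinear bracket_rp fmorph_eq0. Qed.

Lemma kap4_rp w : kap4 (map4 rp w) = ratr (kap4 w).
Proof. by case: w => [[[p q] r] s] /=; rewrite !bracket_rp fmorph_div. Qed.

Lemma good4_rp w : good4 (map4 rp w) = good4 w.
Proof. by case: w => [[[p q] r] s] /=; rewrite !bracket_rp !fmorph_eq0. Qed.

Lemma hilb_rp m : hilb R m = map rp (hilb rat m).
Proof.
elim: m => [|m IH].
  by rewrite /= /rp /= !fmorph_div /= !rmorph1 !rmorph_nat.
rewrite /= IH !map_cat -!map_comp; congr (_ ++ _ ++ _ ++ _); apply: eq_map => p;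
  rewrite /= /rp /f1 /f2 /f3 /f4 /= ?(rmorphB, rmorphD, fmorph_div, rmorph1, rmorph_nat) //.
Qed.

Lemma numstring_rp l : map ratr (numstring rat l) = numstring R l.
Proof.
by case: l; rewrite /= ?(rmorphN, fmorph_div, rmorph1, rmorph_nat).
Qed.

Lemma expected_rp n : map ratr (expected rat n) = expected R n.
Proof.
rewrite /expected /= map_cat /= rmorph1; congr (_ :: _ ++ _).
elim: (K n) => [|l k IH] //=.
by rewrite map_cat IH numstring_rp.
Qed.
End Rat.



Notation Q := rat.
Definition v0 (u : Q) : pt Q := (u,u).
Definition vl (u : Q) : pt Q := (1-u,u).
Definition v1 ev (u : Q) : pt Q := if ev then (3*u,u) else (u,3*u).
Definition vm2 ev (u : Q) : pt Q := if ev then (1-3*u,u) else (1-u,3*u).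
Definition p1 ev (u : Q) : pt Q := if ev then (3*u,u) else (u,3*u).
Definition p2 (ev : bool) (u : Q) : pt Q := (3*u,3*u).
Definition p3 ev (u : Q) : pt Q := if ev then (u,3*u) else (3*u,u).
Definition q3 ev (u : Q) : pt Q := if ev then (1-u,3*u) else (1-3*u,u).
Definition q2 (ev : bool) (u : Q) : pt Q := (1-3*u,3*u).
Definition q1 ev (u : Q) : pt Q := if ev then (1-3*u,u) else (1-u,3*u).
Definition P3 ev u := [:: p1 ev u; p2 ev u; p3 ev u].
Definition Q3 ev u := [:: q3 ev u; q2 ev u; q1 ev u].

Ltac peq := repeat (match goal with
  | |- (_ :: _) = (_ :: _) => congr (_ :: _)
  | |- (_, _) = (_, _) => congr (_, _) end); field; try done.

Lemma upd_v0 u : f1 (v0 u) = v0 (u/2). Proof. rewrite /f1 /v0 /=; peq. Qed.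
Lemma upd_vl u : f4 (vl u) = vl (u/2). Proof. rewrite /f4 /vl /=; peq. Qed.
Lemma upd_v1 ev u : f1 (v1 ev u) = v1 (~~ev) (u/2). Proof. by case: ev; rewrite /f1 /v1 /=; peq. Qed.
Lemma upd_vm2 ev u : f4 (vm2 ev u) = vm2 (~~ev) (u/2). Proof. by case: ev; rewrite /f4 /vm2 /=; peq. Qed.
Lemma upd_P3 ev u : map (@f1 Q) (P3 ev u) = P3 (~~ev) (u/2).
Proof. by case: ev; rewrite /f1 /P3 /p1 /p2 /p3 /=; peq. Qed.
Lemma upd_Q3 ev u : map (@f4 Q) (Q3 ev u) = Q3 (~~ev) (u/2).
Proof. by case: ev; rewrite /f4 /Q3 /q1 /q2 /q3 /=; peq. Qed.

Definition aff (w cx cy : Q) := affmap w 0 0 w cx cy.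
Definition Rw (f g : pt Q -> pt Q) ev u :=
  [:: f (vm2 ev u); f (q3 ev u); f (q2 ev u); f (q1 ev u); f (vl u);
      g (v0 u); g (p1 ev u); g (p2 ev u); g (p3 ev u); g (v1 ev u)].
Definition mkc (l : seq (int * int)) : seq (pt Q) := [seq (x.1%:~R, x.2%:~R) | x <- l].
Definition cfg (ev : bool) (i : nat) : seq (pt Q) := mkc (
  match ev, i with
  | true, 0%N => [:: (1,-3);(3,-1);(3,-3);(1,-3);(1,-1);(1,1);(3,1);(3,3);(1,3);(3,1)]
  | true, 1%N => [:: (-3,1);(-1,3);(-3,3);(-3,1);(-1,1);(1,1);(3,1);(3,3);(1,3);(3,1)]
  | true, _ => [:: (-3,1);(-1,3);(-3,3);(-3,1);(-1,1);(-1,-1);(-1,-3);(-3,-3);(-3,-1);(-1,-3)]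
  | false, 0%N => [:: (3,-1);(1,-3);(3,-3);(3,-1);(1,-1);(1,1);(1,3);(3,3);(3,1);(1,3)]
  | false, 1%N => [:: (-1,3);(-3,1);(-3,3);(-1,3);(-1,1);(1,1);(1,3);(3,3);(3,1);(1,3)]
  | false, _ => [:: (-1,3);(-3,1);(-3,3);(-1,3);(-1,1);(-1,-1);(-3,-1);(-3,-3);(-1,-3);(-3,-1)]
  end)%R.

Lemma cfg12 ev u : Rw (@f1 Q) (@f2 Q) ev u = map (aff (u/2) 0 (1/2)) (cfg ev 0).
Proof.
by case: ev; rewrite /Rw /cfg /mkc /aff /affmap /f1 /f2 /vm2 /q1 /q2 /q3 /vl /v0 /p1 /p2 /p3 /v1 /=; peq.
Qed.
Lemma cfg23 ev u : Rw (@f2 Q) (@f3 Q) ev u = map (aff (u/2) (1/2) (1/2)) (cfg ev 1).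
Proof.
by case: ev; rewrite /Rw /cfg /mkc /aff /affmap /f3 /f2 /vm2 /q1 /q2 /q3 /vl /v0 /p1 /p2 /p3 /v1 /=; peq.
Qed.
Lemma cfg34 ev u : Rw (@f3 Q) (@f4 Q) ev u = map (aff (u/2) 1 (1/2)) (cfg ev 2).
Proof.
by case: ev; rewrite /Rw /cfg /mkc /aff /affmap /f3 /f4 /vm2 /q1 /q2 /q3 /vl /v0 /p1 /p2 /p3 /v1 /=; peq.
Qed.

Definition junc (rw : seq (pt Q)) : seq (pt Q) :=
  let a i := nth (0,0) rw i in
  [:: a 1%N; a 2%N; a 3%N] ++ keep1 (a 0%N) (a 4%N) (Some (a 5%N)) ++
  keep1 (a 4%N) (a 5%N) (Some (a 9%N)) ++ [:: a 6%N; a 7%N; a 8%N].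

Definition letter_of (ev : bool) (i : nat) :=
  if ev then (match i with 0%N => LS | 1%N => LT | _ => LU end)
  else (match i with 0%N => LU | 1%N => LV | _ => LS end).

Lemma cfg_facts ev i : (i < 3)%N ->
  (map (@kap4 Q) (W (junc (cfg ev i))) == numstring Q (letter_of ev i)) &&
  all (@good4 Q) (W (junc (cfg ev i))).
Proof.
by case: ev; case: i => [|[|[|i]]] // _; vm_compute.
Qed.

Definition isAff (g : pt Q -> pt Q) :=
  [/\ (forall x y z, collinear (g x) (g y) (g z) = collinear x y z),
      (forall w, kap4 (map4 g w) = kap4 w) &
      (forall w, good4 (map4 g w) = good4 w)].

Lemma isAff_aff g a b c d e f : a * d - b * c != 0 -> g =1 affmap a b c d e f -> isAff g.
Proof.
move=> det E.
have M : forall w, map4 g w = map4 (affmap a b c d e f) w.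
  by case=> [[[x y] z] t] /=; rewrite !E.
split.
- by move=> x y z; rewrite !E col_aff.
- by move=> w; rewrite M kap4_aff.
- by move=> w; rewrite M good4_aff.
Qed.

Lemma isAff_f1 : isAff (@f1 Q).
Proof. apply: (@isAff_aff _ 0 (1/2) (1/2) 0 0 0); first by vm_compute.
by case=> x y; rewrite /f1 /affmap /=; peq. Qed.
Lemma isAff_f2 : isAff (@f2 Q).
Proof. apply: (@isAff_aff _ (1/2) 0 0 (1/2) 0 (1/2)); first by vm_compute.
by case=> x y; rewrite /f2 /affmap /=; peq. Qed.
Lemma isAff_f3 : isAff (@f3 Q).
Proof. apply: (@isAff_aff _ (1/2) 0 0 (1/2) (1/2) (1/2)); first by vm_compute.
by case=> x y; rewrite /f3 /affmap /=; peq. Qed.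
Lemma isAff_f4 : isAff (@f4 Q).
Proof. apply: (@isAff_aff _ 0 (-(1/2)) (-(1/2)) 0 1 (1/2)); first by vm_compute.
by case=> x y; rewrite /f4 /affmap /=; peq. Qed.
Lemma isAff_aff' w cx cy : w != 0 -> isAff (aff w cx cy).
Proof.
move=> nz; apply: (@isAff_aff _ w 0 0 w cx cy) => //.
by rewrite !mul0r subr0 mulf_neq0.
Qed.

Lemma kapW g s : isAff g -> map (@kap4 Q) (W (map g s)) = map (@kap4 Q) (W s).
Proof. by case=> _ K _; rewrite W_map -map_comp; apply: eq_map => w /=; rewrite K. Qed.
Lemma goodW g s : isAff g -> all (@good4 Q) (W (map g s)) = all (@good4 Q) (W s).
Proof. by case=> _ _ G; rewrite W_map all_map; apply: eq_all => w /=; rewrite G. Qed.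

Lemma junc_map g rw : (forall x y z, collinear (g x) (g y) (g z) = collinear x y z) ->
  size rw = 10%N -> junc (map g rw) = map g (junc rw).
Proof.
move=> gc hs.
have S : forall p y z, keep1 (g p) (g y) (Some (g z)) = map g (keep1 p y (Some z)).
  by move=> p y z; rewrite -(keep1_map gc).
by rewrite /junc !(nth_map (0,0)) ?hs // !S !map_cat.
Qed.

Lemma junc_facts f g (i : nat) ev u w cx cy : (i < 3)%N -> w != 0 ->
  Rw f g ev u = map (aff w cx cy) (cfg ev i) ->
  map (@kap4 Q) (W (junc (Rw f g ev u))) = numstring Q (letter_of ev i) /\
  all (@good4 Q) (W (junc (Rw f g ev u))).
Proof.
move=> hi nz E.
have A := isAff_aff' cx cy nz.
have [A1 _ _] := A.
have sz : size (cfg ev i) = 10%N by clear E; case: ev; case: i hi => [|[|[|i]]].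
rewrite E junc_map // kapW // goodW //.
by have /andP[/eqP -> ->] := cfg_facts ev hi.
Qed.

Lemma l3_cat3 (A B : seq (pt Q)) : size B = 3%N -> l3 (A ++ B) = B.
Proof. by move=> h; rewrite /l3 size_cat h addnK drop_size_cat. Qed.

Lemma W_asm (Y C1 X1 C2 X2 C3 X3 C4 Z : seq (pt Q)) :
  (3 <= size C1)%N -> (3 <= size C2)%N -> (3 <= size C3)%N -> (3 <= size C4)%N ->
  W (Y ++ C1 ++ X1 ++ C2 ++ X2 ++ C3 ++ X3 ++ C4 ++ Z) =
  W (Y ++ take 3 C1) ++ W C1 ++ W (l3 C1 ++ X1 ++ take 3 C2) ++ W C2 ++
  W (l3 C2 ++ X2 ++ take 3 C3) ++ W C3 ++ W (l3 C3 ++ X3 ++ take 3 C4) ++ W C4 ++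
  W (l3 C4 ++ Z).
Proof.
move=> h1 h2 h3 h4.
rewrite (@W_join _ Y C1) // (catA (l3 C1) X1) (@W_join _ (l3 C1 ++ X1) C2) // -catA.
rewrite (catA (l3 C2) X2) (@W_join _ (l3 C2 ++ X2) C3) // -catA.
rewrite (catA (l3 C3) X3) (@W_join _ (l3 C3 ++ X3) C4) // -catA.
done.
Qed.

Lemma all9 T (p : pred T) (a1 a2 a3 a4 a5 a6 a7 a8 a9 : seq T) :
  all p (a1 ++ a2 ++ a3 ++ a4 ++ a5 ++ a6 ++ a7 ++ a8 ++ a9) =
  [&& all p a1, all p a2, all p a3, all p a4, all p a5, all p a6, all p a7, all p a8 & all p a9].
Proof. by rewrite !all_cat. Qed.
Lemma map9 T U (f : T -> U) (a1 a2 a3 a4 a5 a6 a7 a8 a9 : seq T) :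
  map f (a1 ++ a2 ++ a3 ++ a4 ++ a5 ++ a6 ++ a7 ++ a8 ++ a9) =
  map f a1 ++ map f a2 ++ map f a3 ++ map f a4 ++ map f a5 ++ map f a6 ++ map f a7 ++ map f a8 ++ map f a9.
Proof. by rewrite !map_cat. Qed.

Definition body (m : nat) : seq Q := flatten (map (numstring Q) (K m)).

Lemma body_step m : body m.+3 =
  let B := body m.+2 in
  if odd m.+1 then B ++ numstring Q LS ++ B ++ numstring Q LT ++ B ++ numstring Q LU ++ B
  else B ++ numstring Q LU ++ B ++ numstring Q LV ++ B ++ numstring Q LS ++ B.
Proof.
rewrite /body /K.
have -> : (m.+3 - 2 = m.+1)%N by lia.
have -> : (m.+2 - 2 = m)%N by lia.
rewrite [Kw m.+1]/= /=.
by case: (odd m); rewrite /=; repeat (rewrite !(map_cat, flatten_cat) /=).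
Qed.

Lemma expectedE m : expected Q m = 1 :: body m ++ [:: 1].
Proof. by []. Qed.

Definition Inv m ev u :=
  [/\ u != 0,
  (exists H0, hilb Q m = v0 u :: H0 ++ [:: vl u] /\ head (vl u) H0 = v1 ev u /\
      last (v0 u) H0 = vm2 ev u),
  (exists Mid, infl (hilb Q m) = v0 u :: P3 ev u ++ Mid ++ Q3 ev u ++ [:: vl u]),
  all (@good4 Q) (W (infl (hilb Q m))) &
  map (@kap4 Q) (W (infl (hilb Q m))) = expected Q m.+1].

Lemma hilbS (R : realFieldType) m :
  hilb R m.+1 = map (@f1 R) (hilb R m) ++ map (@f2 R) (hilb R m) ++
                map (@f3 R) (hilb R m) ++ map (@f4 R) (hilb R m).
Proof. by []. Qed.

Lemma inflC (x : pt Q) t : infl (x :: t) = x :: inner x t None.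
Proof. by []. Qed.

Lemma step m ev u : ev = odd m.+1 -> Inv m.+1 ev u -> Inv m.+2 (~~ ev) (u/2).
Proof.
move=> eev [nz [H0 [eH [hd lt]]] [Mid eI] gd kl].
set Mn := inner (v0 u) H0 (Some (vl u)).
have eIH : infl (hilb Q m.+1) = v0 u :: Mn ++ [:: vl u].
  by rewrite eH inflC inner_cat.
have eMn : Mn = P3 ev u ++ Mid ++ Q3 ev u.
  move: eI; rewrite eIH => -[] E.
  have : rcons Mn (vl u) = rcons (P3 ev u ++ Mid ++ Q3 ev u) (vl u).
    by rewrite -!cats1 -!catA.
  by case/rcons_inj.
set X := v0 u :: H0 ++ [:: vl u].
have segF : forall g, isAff g -> forall q,
    inner (g (v0 u)) (map g (H0 ++ [:: vl u])) q =
    map g Mn ++ keep1 (g (vm2 ev u)) (g (vl u)) q.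
  move=> g [gc _ _] q.
  rewrite map_cat inner_cat /= (inner_map gc (v0 u) H0 (Some (vl u))).
  by rewrite last_map lt /= cats0.
have segA : forall g, isAff g -> forall a q,
    inner a (map g X) q =
    keep1 a (g (v0 u)) (Some (g (v1 ev u))) ++ map g Mn ++ keep1 (g (vm2 ev u)) (g (vl u)) q.
  move=> g Ag a q.
  rewrite /X map_cons /= segF //.
  have -> : nxt (map g (H0 ++ [:: vl u])) q = Some (g (v1 ev u)).
    by rewrite -hd; case: (H0).
  by [].
have nxtX : forall (g : pt Q -> pt Q) B q, nxt (map g X ++ B) q = Some (g (v0 u)) by [].
have nxtX2 : forall (g : pt Q -> pt Q) q, nxt (map g X) q = Some (g (v0 u)) by [].
have lastX0 : forall (g : pt Q -> pt Q) (x : pt Q), last x (map g (H0 ++ [:: vl u])) = g (vl u).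
  by move=> g x; rewrite map_cat last_cat.
have lastX : forall (g : pt Q -> pt Q) (x : pt Q), last x (map g X) = g (vl u).
  by move=> g x; rewrite /X map_cons; exact: lastX0.
have eIn : infl (hilb Q m.+2) =
  f1 (v0 u) :: map (@f1 Q) Mn ++
  (keep1 (f1 (vm2 ev u)) (f1 (vl u)) (Some (f2 (v0 u))) ++
   keep1 (f1 (vl u)) (f2 (v0 u)) (Some (f2 (v1 ev u)))) ++
  map (@f2 Q) Mn ++
  (keep1 (f2 (vm2 ev u)) (f2 (vl u)) (Some (f3 (v0 u))) ++
   keep1 (f2 (vl u)) (f3 (v0 u)) (Some (f3 (v1 ev u)))) ++
  map (@f3 Q) Mn ++
  (keep1 (f3 (vm2 ev u)) (f3 (vl u)) (Some (f4 (v0 u))) ++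
   keep1 (f3 (vl u)) (f4 (v0 u)) (Some (f4 (v1 ev u)))) ++
  map (@f4 Q) Mn ++ [:: f4 (vl u)].
  rewrite hilbS eH -/X {1}/X map_cons cat_cons inflC.
  rewrite inner_cat nxtX (segF _ isAff_f1).
  rewrite (_ : last _ _ = f1 (vl u)); last exact: lastX0.
  rewrite inner_cat nxtX (segA _ isAff_f2).
  rewrite (_ : last _ _ = f2 (vl u)); last exact: lastX.
  rewrite inner_cat nxtX2 (segA _ isAff_f3).
  rewrite (_ : last _ _ = f3 (vl u)); last exact: lastX.
  rewrite (segA _ isAff_f4) /=.
  by rewrite -!catA.
have tk : forall g : pt Q -> pt Q, take 3 (map g Mn) = map g (P3 ev u).
  by move=> g; rewrite eMn !map_cat take_size_cat // size_map.
have lk : forall g : pt Q -> pt Q, l3 (map g Mn) = map g (Q3 ev u).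
  by move=> g; rewrite eMn !map_cat catA l3_cat3 // size_map.
have szM : forall g : pt Q -> pt Q, (3 <= size (map g Mn))%N.
  by move=> g; rewrite size_map eMn !size_cat.
have jE : forall f g : pt Q -> pt Q, junc (Rw f g ev u) =
    map f (Q3 ev u) ++ (keep1 (f (vm2 ev u)) (f (vl u)) (Some (g (v0 u))) ++
      keep1 (f (vl u)) (g (v0 u)) (Some (g (v1 ev u)))) ++ map g (P3 ev u).
  by move=> f g; rewrite -catA.
have eW : W (infl (hilb Q m.+2)) =
  W (map (@f1 Q) (v0 u :: P3 ev u)) ++ W (map (@f1 Q) Mn) ++
  W (junc (Rw (@f1 Q) (@f2 Q) ev u)) ++ W (map (@f2 Q) Mn) ++
  W (junc (Rw (@f2 Q) (@f3 Q) ev u)) ++ W (map (@f3 Q) Mn) ++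
  W (junc (Rw (@f3 Q) (@f4 Q) ev u)) ++ W (map (@f4 Q) Mn) ++
  W (map (@f4 Q) (Q3 ev u ++ [:: vl u])).
  rewrite eIn -cat1s W_asm ?szM // !tk !lk !jE.
  by rewrite map_cat.
have eWo : W (infl (hilb Q m.+1)) =
    [:: (v0 u, p1 ev u, p2 ev u, p3 ev u)] ++ W Mn ++ [:: (q3 ev u, q2 ev u, q1 ev u, vl u)].
  rewrite eIH -cat1s W_join; last by rewrite eMn !size_cat.
  have -> : take 3 Mn = P3 ev u by rewrite eMn take_size_cat.
  have -> : l3 Mn = Q3 ev u by rewrite eMn catA l3_cat3.
  by [].
set wP := (v0 u, p1 ev u, p2 ev u, p3 ev u).
set wQ := (q3 ev u, q2 ev u, q1 ev u, vl u).
have kl' : kap4 wP :: map (@kap4 Q) (W Mn) ++ [:: kap4 wQ] = 1 :: body m.+2 ++ [:: 1].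
  by rewrite -expectedE -kl eWo !map_cat.
have [k1 kM k2] : [/\ kap4 wP = 1, map (@kap4 Q) (W Mn) = body m.+2 & kap4 wQ = 1].
  case: kl' => e1 E; move: E; rewrite !cats1 => /rcons_inj [e2 e3]; by split.
have gd' : [&& good4 wP, all (@good4 Q) (W Mn) & good4 wQ].
  by move: gd; rewrite eWo !all_cat /= !andbT.
case/and3P: gd' => gP gM gQ.
have w2 : u / 2 != 0 by rewrite mulf_neq0 // invr_eq0 pnatr_eq0.
have [J1 G1] := junc_facts (i := 0) erefl w2 (cfg12 ev u).
have [J2 G2] := junc_facts (i := 1) erefl w2 (cfg23 ev u).
have [J3 G3] := junc_facts (i := 2) erefl w2 (cfg34 ev u).
have WP0 : W (v0 u :: P3 ev u) = [:: wP] by [].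
have WQ0 : W (Q3 ev u ++ [:: vl u]) = [:: wQ] by [].
have gA : forall g, isAff g -> forall s, all (@good4 Q) (W (map g s)) = all (@good4 Q) (W s).
  by move=> g A s; exact: goodW.
have kA : forall g, isAff g -> forall s, map (@kap4 Q) (W (map g s)) = map (@kap4 Q) (W s).
  by move=> g A s; exact: kapW.
split.
- exact: w2.
- exists (map (@f1 Q) (H0 ++ [:: vl u]) ++ map (@f2 Q) X ++ map (@f3 Q) X ++ map (@f4 Q) (v0 u :: H0)).
  split; last split.
  + rewrite hilbS eH -/X -upd_v0 -upd_vl.
    rewrite {1}/X map_cons /X.
    rewrite (_ : map (@f4 Q) (v0 u :: H0 ++ [:: vl u]) =
       map (@f4 Q) (v0 u :: H0) ++ [:: f4 (vl u)]); last by rewrite map_cons map_cat.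
    by rewrite cat_cons -!catA.
  + rewrite -upd_v1 -hd; by case: (H0).
  + rewrite !last_cat -upd_vm2 -lt; exact: last_map.
- exists (map (@f1 Q) Mid ++ map (@f1 Q) (Q3 ev u) ++
    (keep1 (f1 (vm2 ev u)) (f1 (vl u)) (Some (f2 (v0 u))) ++
     keep1 (f1 (vl u)) (f2 (v0 u)) (Some (f2 (v1 ev u)))) ++
    map (@f2 Q) Mn ++
    (keep1 (f2 (vm2 ev u)) (f2 (vl u)) (Some (f3 (v0 u))) ++
     keep1 (f2 (vl u)) (f3 (v0 u)) (Some (f3 (v1 ev u)))) ++
    map (@f3 Q) Mn ++
    (keep1 (f3 (vm2 ev u)) (f3 (vl u)) (Some (f4 (v0 u))) ++
     keep1 (f3 (vl u)) (f4 (v0 u)) (Some (f4 (v1 ev u)))) ++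
    map (@f4 Q) (P3 ev u) ++ map (@f4 Q) Mid).
  rewrite eIn -upd_v0 -upd_P3 -upd_Q3 -upd_vl.
  rewrite eMn !map_cat.
  by rewrite -!catA.
- rewrite eW all9.
  rewrite (gA _ isAff_f1 (v0 u :: P3 ev u)) (gA _ isAff_f1 Mn) (gA _ isAff_f2 Mn).
  rewrite (gA _ isAff_f3 Mn) (gA _ isAff_f4 Mn) (gA _ isAff_f4 (Q3 ev u ++ [:: vl u])).
  rewrite G1 G2 G3 gM WP0 WQ0.
  have -> : all (@good4 Q) [:: wP] = good4 wP && true by [].
  have -> : all (@good4 Q) [:: wQ] = good4 wQ && true by [].
  by rewrite gP gQ.
- rewrite eW map9.
  rewrite (kA _ isAff_f1 (v0 u :: P3 ev u)) (kA _ isAff_f1 Mn) (kA _ isAff_f2 Mn).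
  rewrite (kA _ isAff_f3 Mn) (kA _ isAff_f4 Mn) (kA _ isAff_f4 (Q3 ev u ++ [:: vl u])).
  rewrite J1 J2 J3 kM WP0 WQ0.
  have -> : map (@kap4 Q) [:: wP] = [:: 1] by rewrite -k1.
  have -> : map (@kap4 Q) [:: wQ] = [:: 1] by rewrite -k2.
  rewrite expectedE body_step -eev /=.
  by case: (ev); rewrite /=; repeat (rewrite -!catA /=).
Qed.


Lemma base : Inv 1 true (1/8).
Proof.
split.
- by vm_compute.
- exists (take 14 (behead (hilb Q 1))).
  split; last split; by apply/eqP; vm_compute.
- exists (take 6 (drop 4 (infl (hilb Q 1)))).
  by apply/eqP; vm_compute.
- by vm_compute.
- by apply/eqP; vm_compute.
Qed.

Lemma inv_all n : (2 <= n)%N -> exists u, Inv n.-1 (odd n.-1) u.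
Proof.
case: n => [|[|n]] // _.
elim: n => [|n [u IH]]; first by exists (1/8); exact: base.
exists (u/2); exact: (step erefl IH).
Qed.

Unset Implicit Arguments.


Theorem mainTheorem10 (R : realFieldType) (n : nat) (a b c d e f : R) :
  (2 <= n)%N -> a * d - b * c != 0 ->
  let s := inflections (map (affmap a b c d e f) (hilbert R n)) in
  let N := size s in
  (forall k : nat, (2 <= k <= N - 2)%N ->
      bracket (tv s k.-1) (tv s k) != 0 /\ kappabar s k = 0) /\
  [seq kappa s k | k <- iota 2 (N - 3)] = expected R n.
Proof.
move=> hn det.
have [u [_ _ _ gd kl]] := inv_all hn.
set I0 := infl (hilb rat n.-1) in gd kl.
set h := fun p : pt rat => affmap a b c d e f (rp R p).
have hcol : forall x y z, collinear (h x) (h y) (h z) = collinear x y z.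
  by move=> x y z; rewrite /h col_aff // col_rp.
have m4 : forall w, map4 h w = map4 (affmap a b c d e f) (map4 (@rp R) w).
  by case=> [[[x y] z] t].
have es : inflections (map (affmap a b c d e f) (hilbert R n)) = map h I0.
  by rewrite inflectionsE /hilbert hilb_rp -map_comp infl_map.
cbv zeta; rewrite es.
split.
- apply: good_cond.
  rewrite W_map all_map.
  move: gd; apply: sub_all => w /=.
  by rewrite m4 good4_aff // good4_rp.
- rewrite kappa_list W_map -map_comp.
  rewrite (eq_map (g := ratr \o (@kap4 rat))); last first.
    by move=> w /=; rewrite m4 kap4_aff // kap4_rp.
  rewrite map_comp kl.
  have -> : n.-1.+1 = n by move: hn; clear; case: n.
  exact: expected_rp.
Qed.
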